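(* Let $G=(V,E)$ be a connected cograph with at least two vertices. Then $|\mathrm{core}(G)|\le 1$, and if $\mathrm{core}(G)=\{w\}$ then $\gamma(G-w)>\gamma(G)$ (i.e. $\mathrm{core}(G)\subseteq V^+$).
   Context: All graphs are finite, simple and undirected. A cograph is a graph with no induced path on four vertices ($P_4$-free graph). $\gamma(G)$ is the domination number; a minimum dominating set (mds) is a dominating set of size $\gamma(G)$; $\mathrm{core}(G)$ is the set of vertices in every mds. $G-w$ is $G$ with $w$ deleted and $V^+=\{v:\gamma(G-v)>\gamma(G)\}$. *)

(* Defs.v *)
From mathcomp Require Import all_boot.
Set Implicit Arguments. Unset Strict Implicit. Unset Printing Implicit Defensive.

Section Graphs.
Variable T : finType.

Definition simple_graph (e : rel T) : Prop := irreflexive e /\ symmetric e.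

(* P4-free: no four distinct vertices a-b-c-d inducing a path. *)
Definition cograph (e : rel T) : Prop :=
  forall a b c d : T,
    a != b -> a != c -> a != d -> b != c -> b != d -> c != d ->
    ~ [/\ e a b, e b c, e c d & [&& ~~ e a c, ~~ e b d & ~~ e a d]].

Definition connected_graph (e : rel T) : Prop := forall x y : T, connect e x y.

(* Domination in the induced subgraph G[S] (G = G[setT], G - w = G[setT :\ w]). *)
Definition dominating (e : rel T) (S D : {set T}) : bool :=
  (D \subset S) && [forall x in S, (x \in D) || [exists y in D, e x y]].

(* domination number of G[S] (S itself dominates, so the min is attained) *)
Definition gamma (e : rel T) (S : {set T}) : nat :=
  \big[minn/#|S|]_(D : {set T} | dominating e S D) #|D|.

Definition mds (e : rel T) (S D : {set T}) : bool :=
  dominating e S D && (#|D| == gamma e S).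

Definition core (e : rel T) (S : {set T}) : {set T} :=
  [set v in S | [forall D : {set T}, mds e S D ==> (v \in D)]].

End Graphs.

(* Main.v *)
Require Import Defs.
From mathcomp Require Import all_boot zify.
Set Implicit Arguments. Unset Strict Implicit. Unset Printing Implicit Defensive.

Definition er (T : finType) (e : rel T) (S : {set T}) : rel T :=
  fun x y => [&& x \in S, y \in S & e x y].
Definition ce (T : finType) (e : rel T) : rel T := fun x y => (x != y) && ~~ e x y.
Definition gcon (T : finType) (e : rel T) (S : {set T}) :=
  forall x y, x \in S -> y \in S -> connect (er e S) x y.

Lemma cross (T : finType) (r : rel T) (P : pred T) x y :
  connect r x y -> P x -> ~~ P y ->
  exists u w, [/\ connect r x u, r u w, P u & ~~ P w].
Proof.
case/connectP => p; elim: p x => [|z p IH] x /=; first by move=> _ -> ->.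
case/andP => rxz pzp Hy Px NP.
case Pz: (P z).
- have [u [w [c1 r1 p1 p2]]] := IH z pzp Hy Pz NP.
  exists u, w; split => //; exact: connect_trans (connect1 rxz) c1.
- by exists x, z; split => //; rewrite ?connect0 ?Pz.
Qed.

Lemma er_mem (T : finType) (e : rel T) S x y :
  connect (er e S) x y -> x \in S -> y \in S.
Proof.
move=> c xS; apply/negPn/negP => yS.
have [u [w [_ /and3P [_ wS _] _ nw]]] := cross (P := mem S) c xS yS.
by move/negP: nw.
Qed.

Lemma er_sym (T : finType) (e : rel T) S : symmetric e -> symmetric (er e S).
Proof. by move=> se x y; rewrite /er se andbCA. Qed.

Lemma isolate (T : finType) (e : rel T) (S : {set T}) v a :
  a \in S :\ v -> (forall t, t \in S :\ v -> e v t) ->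
  ~~ connect (er (ce e) S) v a.
Proof.
move=> aS H; apply/negP => c.
have av : a != v by move: aS; rewrite in_setD1 => /andP[].
have [u [w [_ /and3P [uS wS /andP [uw nuw]] /eqP Pu Pw]]] :=
  cross (P := pred1 v) c (eqxx v) av.
subst u.
have: w \in S :\ v by rewrite in_setD1 wS eq_sym uw.
by move/H; rewrite (negbTE nuw).
Qed.
Lemma step (T : finType) (e : rel T) (S : {set T}) v a c :
  simple_graph e -> cograph e -> v \in S ->
  a \in S :\ v -> c \in S :\ v -> ~~ connect (er e (S :\ v)) a c -> gcon e S ->
  forall t, t \in S :\ v -> e v t.
Proof.
move=> [ir sy] cog vS aS' cS' nac gc t tS'.
apply/negPn/negP => nvt.
set S' := S :\ v.
have vS' : v \notin S' by rewrite in_setD1 eqxx.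
have sub : forall x, x \in S' -> x \in S by move=> x; rewrite in_setD1 => /andP[].
have esym := er_sym S' sy.
have csym : connect_sym (er e S') := sym_connect_sym esym.
set D := [set u | connect (er e S') t u].
have D1 : forall u, u \in D -> u \in S' by move=> u; rewrite inE => /er_mem; apply.
have Dc : forall u w, u \in D -> w \in S' -> e u w -> w \in D.
  move=> u w uD wS euw; have uS := D1 u uD; move: uD; rewrite !inE => cu.
  apply: connect_trans cu (connect1 _).
  by rewrite /er uS wS euw.
have [r rS' rD] : exists2 r, r \in S' & r \notin D.
  case aD: (a \in D); last by exists a; rewrite ?aD.
  exists c => //; apply/negP; rewrite inE => ctc; move: aD; rewrite inE => cta.
  by move/negP: nac; apply; rewrite csym in cta; apply: connect_trans cta ctc.
have [c' [c'S' c'D evc']] : exists c', [/\ c' \in S', c' \notin D & e v c'].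
  have := gc r v (sub r rS') vS.
  move/(cross (P := fun u => (u \in S') && (u \notin D))).
  rewrite rS' rD (negbTE vS') => /(_ erefl erefl) [u [w [_ /and3P [uS wS euw] /andP [uS' uD] Pw]]].
  case wS': (w \in S').
    move: Pw; rewrite wS' /= negbK => wD.
    by move: uD; rewrite (Dc w u wD uS') // sy.
  have wv : w = v by move/negbT: wS'; rewrite in_setD1 wS andbT negbK => /eqP.
  by exists u; split => //; rewrite sy -wv.
have tD : t \in D by rewrite inE connect0.
have [b [bD evb]] : exists b, b \in D /\ e v b.
  have := gc t v (sub t tS') vS.
  move/(cross (P := mem D)) => /(_ tD).
  have vD : v \notin D by apply/negP => /D1; apply/negP.
  move=> /(_ vD) [u [w [_ /and3P [uS wS euw] uD wD]]].
  case wS': (w \in S').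
    by exfalso; exact: (negP wD (Dc u w uD wS' euw)).
  have wv : w = v by move/negbT: wS'; rewrite in_setD1 wS andbT negbK => /eqP.
  by exists u; split => //; rewrite sy -wv.
have ctb : connect (er e S') t b by move: bD; rewrite inE.
have nnb : ~~ ~~ e v b by rewrite negbK.
have [u [w [ctu /and3P [uS' wS' euw] nvu]]] :=
  cross (P := fun u => ~~ e v u) ctb nvt nnb.
rewrite /= negbK => evw.
have uD : u \in D by rewrite inE.
have wD : w \in D by apply: Dc uD wS' euw.
have neq : forall x y, x \in D -> y \notin D -> x != y.
  by move=> x y xD yD; apply/eqP => exy; rewrite -exy xD in yD.
have nS : forall x, x \in S' -> x != v.
  by move=> x xS; apply/eqP => exv; rewrite -exv xS in vS'.
have nE : forall x, x \in D -> ~~ e x c'.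
  by move=> x xD; apply/negP => exc; rewrite (Dc x c' xD c'S' exc) in c'D.
apply: (cog u w v c').
- by apply/eqP => euw'; rewrite euw' ir in euw.
- exact: nS.
- exact: neq.
- exact: nS.
- exact: neq.
- by rewrite eq_sym; exact: nS.
- split => //; first by rewrite sy.
  by rewrite sy nvu nE // nE.
Qed.

Lemma ce_simple (T : finType) (e : rel T) : simple_graph e -> simple_graph (ce e).
Proof.
move=> [ir sy]; split; first by move=> x; rewrite /ce eqxx.
by move=> x y; rewrite /ce eq_sym sy.
Qed.

Lemma ce_cograph (T : finType) (e : rel T) : simple_graph e -> cograph e -> cograph (ce e).
Proof.
move=> [ir sy] cog a b c d ab ac ad bc bd cd [].
rewrite /ce ab bc cd ac bd ad /= !negbK => /negbTE nab /negbTE nbc /negbTE ncd /and3P [eac ebd ead].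
apply: (cog c a d b); rewrite ?(eq_sym c a) ?(eq_sym c b) ?(eq_sym d b) //.
split; rewrite ?(sy c a) ?(sy d b) ?(sy c b) ?eac ?ead ?ebd ?nab ?ncd ?nbc //.
Qed.

Lemma cce (T : finType) (e : rel T) S : irreflexive e -> er (ce (ce e)) S =2 er e S.
Proof.
move=> ir x y; rewrite /er /ce; case: eqP => [->|_] /=; first by rewrite ir !andbF.
by rewrite negbK.
Qed.

Lemma notgcon (T : finType) (e : rel T) S : ~ gcon e S ->
  exists a c, [/\ a \in S, c \in S & ~~ connect (er e S) a c].
Proof.
move=> ng; case: (boolP [forall a, forall c, (a \in S) ==> (c \in S) ==> connect (er e S) a c]).
  move/forallP => H; exfalso; apply: ng => x y xS yS.
  by move/forallP: (H x) => /(_ y); rewrite xS yS.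
case/forallPn => a /forallPn [c]; rewrite !negb_imply => /andP [aS /andP [cS nc]].
by exists a, c.
Qed.

Lemma seinsche (T : finType) n : forall (e : rel T) (S : {set T}),
  simple_graph e -> cograph e -> #|S| = n -> 2 <= n -> gcon e S -> gcon (ce e) S -> False.
Proof.
elim/ltn_ind: n => n IH e S sg cog cS n2 g1 g2.
have [v vS] : exists v, v \in S.
  by apply/set0Pn; rewrite -card_gt0 cS; apply: leq_trans n2.
have cS' : #|S :\ v| = n.-1 by rewrite -cS (cardsD1 v S) vS.
have [ir sy] := sg.
case: (leqP 2 n.-1) => n1.
- have ltn : n.-1 < n by rewrite prednK // (leq_trans _ n2).
  case: (boolP [forall a, forall c, (a \in S :\ v) ==> (c \in S :\ v) ==> connect (er e (S :\ v)) a c]) => ge.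
  + have ng : ~ gcon (ce e) (S :\ v).
      move=> h; apply: (IH n.-1 ltn e (S :\ v) sg cog cS' n1) => // x y xS yS.
      by move/forallP: ge => /(_ x) /forallP /(_ y); rewrite xS yS.
    have [a [c [aS cS0 nac]]] := notgcon ng.
    have H := step (ce_simple sg) (ce_cograph sg cog) vS aS cS0 nac g2.
    have := isolate aS H; rewrite (eq_connect (cce S ir)) => /negP; apply.
    apply: g1 => //; by move: aS; rewrite in_setD1 => /andP[].
  + have [a [c [aS cS0 nac]]] : exists a c, [/\ a \in S :\ v, c \in S :\ v & ~~ connect (er e (S :\ v)) a c].
      case/forallPn: ge => a /forallPn [c]; rewrite !negb_imply => /andP [aS /andP [cS0 nc]].
      by exists a, c.
    have H := step sg cog vS aS cS0 nac g1.
    have := isolate aS H => /negP; apply.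
    apply: g2 => //; by move: aS; rewrite in_setD1 => /andP[].
- have : #|S :\ v| = 1.
    by rewrite cS'; move: n1 n2; clear; lia.
  move/eqP/cards1P => [a Sa].
  have aS : a \in S :\ v by rewrite Sa set11.
  have aS0 : a \in S by move: aS; rewrite in_setD1 => /andP[].
  case: (boolP (e v a)) => eva.
  + have H : forall t, t \in S :\ v -> e v t by move=> t; rewrite Sa inE => /eqP ->.
    by have := isolate aS H => /negP; apply; apply: g2.
  + have H : forall t, t \in S :\ v -> ce e v t.
      move=> t; rewrite Sa inE => /eqP ->; rewrite /ce eva andbT.
      by move: aS; rewrite in_setD1 eq_sym => /andP[].
    have := isolate aS H; rewrite (eq_connect (cce S ir)) => /negP; apply.
    by apply: g1.
Qed.

Lemma bigmin_le (I : finType) (P : pred I) (F : I -> nat) x0 i :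
  P i -> \big[minn/x0]_(j | P j) F j <= F i.
Proof.
move=> Pi; rewrite -big_filter.
have : i \in filter P (index_enum I) by rewrite mem_filter Pi mem_index_enum.
elim: (filter P _) => [|j s IH] //=; rewrite big_cons inE => /orP [/eqP <-|/IH H].
  exact: geq_minl.
exact: leq_trans (geq_minr _ _) H.
Qed.

Lemma bigmin_cases (I : finType) (P : pred I) (F : I -> nat) x0 :
  \big[minn/x0]_(j | P j) F j = x0 \/ exists2 i, P i & \big[minn/x0]_(j | P j) F j = F i.
Proof.
rewrite -big_filter.
have : all P (filter P (index_enum I)) by apply/allP => x; rewrite mem_filter => /andP[].
elim: (filter P _) => [|j s IH]; first by rewrite big_nil; left.
rewrite big_cons /= => /andP [Pj /IH [->|[i Pi ->]]].
- by rewrite /minn; case: ltnP => h; [right; exists j | left].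
- by rewrite /minn; case: ltnP => h; [right; exists j | right; exists i].
Qed.

Lemma gamma_le (T : finType) (e : rel T) (S D : {set T}) : dominating e S D -> gamma e S <= #|D|.
Proof. by move=> d; rewrite /gamma; apply: bigmin_le. Qed.

Lemma dom_self (T : finType) (e : rel T) (S : {set T}) : dominating e S S.
Proof. by rewrite /dominating subxx /=; apply/forallP => x; apply/implyP => ->. Qed.

Lemma gamma_ex (T : finType) (e : rel T) (S : {set T}) : exists D, dominating e S D /\ #|D| = gamma e S.
Proof.
rewrite /gamma; case: (bigmin_cases (fun D => dominating e S D) (fun D : {set T} => #|D|) #|S|) => [->|[D dD ->]]; last by exists D.
by exists S; split => //; apply: dom_self.
Qed.

Lemma core_mem (T : finType) (e : rel T) (S : {set T}) v (D : {set T}) :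
  v \in core e S -> dominating e S D -> #|D| = gamma e S -> v \in D.
Proof.
rewrite inE => /andP [_ /forallP /(_ D) /implyP H] d c; apply: H.
by rewrite /mds d c eqxx.
Qed.

Lemma domI (T : finType) (e : rel T) (S D : {set T}) :
  D \subset S -> (forall x, x \in S -> x \notin D -> exists2 y, y \in D & e x y) ->
  dominating e S D.
Proof.
move=> sub H; rewrite /dominating sub /=; apply/forallP => x; apply/implyP => xS.
case xD: (x \in D) => //=; have [y yD exy] := H x xS (negbT xD).
by apply/existsP; exists y; rewrite yD.
Qed.

Lemma domE (T : finType) (e : rel T) (S D : {set T}) x :
  dominating e S D -> x \in S -> x \notin D -> exists2 y, y \in D & e x y.
Proof.
case/andP => _ /forallP /(_ x) /implyP H xS xD.
move: (H xS); rewrite (negbTE xD) /= => /existsP [y /andP [yD exy]].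
by exists y.
Qed.

Lemma gamma_pos (T : finType) (e : rel T) (S : {set T}) x : x \in S -> 0 < gamma e S.
Proof.
move=> xS; have [D [dD cD]] := gamma_ex e S; rewrite -cD card_gt0.
apply/set0Pn; case: (boolP (x \in D)) => xD; first by exists x.
by have [y yD _] := domE dD xS xD; exists y.
Qed.

Lemma gamma_ge2 (T : finType) (e : rel T) (S : {set T}) x :
  x \in S -> (forall u, ~ dominating e S [set u]) -> 1 < gamma e S.
Proof.
move=> xS nu; have [D [dD cD]] := gamma_ex e S.
have := gamma_pos e xS; rewrite -cD leq_eqVlt => /orP [|] // /eqP/esym/eqP/cards1P [u Du].
by exfalso; apply: (nu u); rewrite -Du.
Qed.

Lemma er_T (T : finType) (e : rel T) : er e [set: T] =2 e.
Proof. by move=> x y; rewrite /er !in_setT. Qed.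

Theorem proposition3 (T : finType) (e : rel T) :
  simple_graph e -> cograph e -> connected_graph e -> 2 <= #|T| ->
  #|core e [set: T]| <= 1 /\
  (forall w : T, core e [set: T] = [set w] ->
     gamma e [set: T] < gamma e ([set: T] :\ w)).
Proof.
move=> sg cog con n2; have [ir sy] := sg.
have g1 : gcon e [set: T] by move=> x y _ _; rewrite (eq_connect (er_T e)).
have ng : ~ gcon (ce e) [set: T].
  by move=> h; apply: (seinsche sg cog (cardsT T) n2 g1 h).
have [a [c [_ _ nac]]] := notgcon ng.
rewrite (eq_connect (er_T (ce e))) in nac.
set C := [set u | connect (ce e) a u].
have key : forall x y, x \in C -> y \notin C -> e x y.
  move=> x y xC yC; have xy : x != y by apply/eqP => exy; rewrite -exy xC in yC.
  apply/negPn/negP => nxy; move/negP: yC; apply; rewrite inE.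
  apply: connect_trans (_ : connect (ce e) a x) (connect1 _); first by rewrite inE in xC.
  by rewrite /ce xy.
have aC : a \in C by rewrite inE connect0.
have cC : c \notin C by rewrite inE.
have pairdom : forall x y, x \in C -> y \notin C -> dominating e [set: T] [set x; y].
  move=> x y xC yC; apply: domI; first exact: subsetT.
  move=> z _ _; case zC: (z \in C).
  - by exists y; rewrite ?set22 // key // zC.
  - by exists x; rewrite ?set21 // sy key // zC.
have nxC : forall x y, x \in C -> y \notin C -> x != y.
  by move=> x y xC yC; apply/eqP => exy; rewrite -exy xC in yC.
case: (boolP [exists u, dominating e [set: T] [set u]]).
- case/existsP => u du.
  have gm1 : gamma e [set: T] = 1.
    apply/eqP; rewrite eqn_leq (leq_trans (gamma_le du)) ?cards1 //.
    exact: (gamma_pos e (in_setT u)).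
  have cu : core e [set: T] \subset [set u].
    by apply/subsetP => x xc; apply: core_mem xc du _; rewrite cards1 gm1.
  split; first by rewrite (leq_trans (subset_leq_card cu)) ?cards1.
  move=> w cw.
  have wu : w = u.
    have : w \in [set u] by apply/(subsetP cu); rewrite cw set11.
    by move/set1P.
  subst w; rewrite gm1.
  have [x xS] : exists x, x \in [set: T] :\ u.
    apply/set0Pn; rewrite -card_gt0.
    have := cardsD1 u [set: T]; rewrite in_setT cardsT => h.
    by move: n2; rewrite h.
  apply: (gamma_ge2 xS) => y dy.
  have yS : y \in [set: T] :\ u by case/andP: dy => /subsetP H _; apply: H; rewrite set11.
  have yu : y != u by move: yS; rewrite in_setD1 => /andP[].
  have dyT : dominating e [set: T] [set y].
    apply: domI; first exact: subsetT.
    move=> z _ zy; exists y; rewrite ?set11 //.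
    case: (eqVneq z u) => [->|zu].
    - have yu' : y \notin [set u] by rewrite inE.
      have [y' /set1P ->] := domE du (in_setT y) yu'.
      by rewrite sy.
    - have zS : z \in [set: T] :\ u by rewrite in_setD1 zu in_setT.
      by have [y' /set1P ->] := domE dy zS zy.
  have uc : u \in core e [set: T] by rewrite cw set11.
  have : u \in [set y] by apply: (core_mem uc dyT); rewrite cards1 gm1.
  by move/set1P => uy; rewrite uy eqxx in yu.
- move/existsPn => nu'.
  have nu : forall u, ~ dominating e [set: T] [set u] by move=> u du; move/negP: (nu' u).
  have gm2 : gamma e [set: T] = 2.
    apply/eqP; rewrite eqn_leq (gamma_ge2 (in_setT a) nu) andbT.
    by apply: leq_trans (gamma_le (pairdom a c aC cC)) _; rewrite cards2 (nxC a c aC cC).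
  have core0 : core e [set: T] = set0.
    apply/setP => v; rewrite in_set0; apply/negP => vc.
    have [a0 a0C a0v] : exists2 a0, a0 \in C & a0 != v.
      case: (boolP [exists a0, (a0 \in C) && (a0 != v)]).
        by case/existsP => a0 /andP [h1 h2]; exists a0.
      move/existsPn => H; exfalso; apply: (nu v).
      have vC : v \in C.
        by move: (H a); rewrite aC /= negbK => /eqP <-.
      apply: domI; first exact: subsetT.
      move=> z _ zv; exists v; rewrite ?set11 // sy key //.
      apply/negP => zC; move: (H z); rewrite zC /=; move: zv; rewrite inE => ->.
      by [].
    have [b0 b0C b0v] : exists2 b0, b0 \notin C & b0 != v.
      case: (boolP [exists b0, (b0 \notin C) && (b0 != v)]).
        by case/existsP => b0 /andP [h1 h2]; exists b0.
      move/existsPn => H; exfalso; apply: (nu v).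
      have vC : v \notin C.
        by move: (H c); rewrite cC /= negbK => /eqP <-.
      apply: domI; first exact: subsetT.
      move=> z _ zv; exists v; rewrite ?set11 // key //.
      apply/negPn/negP => zC; move: (H z); rewrite zC /=; move: zv; rewrite inE => ->.
      by [].
    have := core_mem vc (pairdom a0 b0 a0C b0C).
    rewrite cards2 (nxC a0 b0 a0C b0C) gm2 => /(_ erefl).
    by rewrite !inE eq_sym (negbTE a0v) eq_sym (negbTE b0v).
  split; first by rewrite core0 cards0.
  move=> w; rewrite core0 => h.
  have : w \in set0 by rewrite h set11.
  by rewrite in_set0.
Qed.
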